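(* Let $r$ be a prime power, $q=r^2$, and let $0\le k\le n\le q$ be integers. Then for every integer $i$ with $0\le i\le n-k$ there exists a Hermitian self-orthogonal matrix-product code over $\mathbb{F}_q$ with parameters $[2n,n-i,d]_q$ where $d\ge\min\{2(n-k+1),k+i+1\}$.
   Context: For $a\in\mathbb{F}_q$, $\overline{a}:=a^r$. The Hermitian inner product on $\mathbb{F}_q^n$ is $\langle u,v\rangle_H=\sum_i u_i\overline{v_i}$; a linear code $C$ is Hermitian self-orthogonal if $C\subseteq C^{\perp_H}$. A code with parameters $[n,k,d]_q$ has length $n$, dimension $k$, minimum Hamming weight $d$. If $C_1,\dots,C_s$ are linear codes of length $m$ with generator matrices $G_i$ and $A=[a_{ij}]\in M_{s,l}(\mathbb{F}_q)$, the matrix-product code $[C_1,\dots,C_s]\cdot A$ is the linear code of length $ml$ generated by the block matrix whose $(i,j)$ block is $a_{ij}G_i$. *)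

(* Defs.v *)
From HB Require Import structures.
From mathcomp Require Import all_boot all_order all_algebra all_fingroup all_field.
Set Implicit Arguments. Unset Strict Implicit. Unset Printing Implicit Defensive.
Import GRing.Theory.
Local Open Scope ring_scope.

(* A linear code of length n over F is represented by a generator matrix
   G : 'M[F]_(k, n); its codewords are the row vectors in the row space of G. *)
Definition in_code {F : fieldType} {k n : nat} (G : 'M[F]_(k, n)) (u : 'rV[F]_n) : bool :=
  (u <= G)%MS.

Definition code_dim {F : fieldType} {k n : nat} (G : 'M[F]_(k, n)) : nat := \rank G.

Definition wt {F : fieldType} {n : nat} (u : 'rV[F]_n) : nat := #|[set j | u 0 j != 0]|.

Definition min_dist_ge {F : fieldType} {k n : nat} (G : 'M[F]_(k, n)) (d : nat) : Prop :=
  forall u : 'rV[F]_n, in_code G u -> u != 0 -> (d <= wt u)%N.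

(* Hermitian inner product <u,v>_H = sum_i u_i * v_i^r  (conjugation a |-> a^r) *)
Definition herm_ip {F : fieldType} (r : nat) {n : nat} (u v : 'rV[F]_n) : F :=
  \sum_(j < n) u 0 j * (v 0 j) ^+ r.

Definition herm_self_orth {F : fieldType} (r : nat) {k n : nat} (G : 'M[F]_(k, n)) : Prop :=
  forall u v : 'rV[F]_n, in_code G u -> in_code G v -> herm_ip r u v = 0.

(* Generator matrix of the matrix-product code [C_1,...,C_s] . A, where C_i has
   generator matrix G i : 'M_(kk i, m) and A : 'M_(s, l): the block matrix whose
   (i,j) block is a_ij G_i. *)
Definition mp_gen {F : fieldType} {s l m : nat} (kk : 'I_s -> nat)
  (G : forall i : 'I_s, 'M[F]_(kk i, m)) (A : 'M[F]_(s, l)) :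
  'M[F]_(\sum_(i < s) kk i, \sum_(j < l) m) :=
  \mxblock_(i < s, j < l) (A i j *: G i).

(* Main.v *)
Require Import Defs.
From HB Require Import structures.
From mathcomp Require Import all_boot all_order all_algebra all_fingroup all_field.
From mathcomp Require Import all_solvable.
From mathcomp Require Import ring zify.
Set Implicit Arguments. Unset Strict Implicit. Unset Printing Implicit Defensive.
Import GRing.Theory.
Local Open Scope ring_scope.



Section Gen.
Variable F : fieldType.

Lemma wtE n (u : 'rV[F]_n) : wt u = (\sum_j (u 0%R j != 0%R : nat))%N.
Proof.
rewrite /wt -sum1_card big_mkcond /=; apply: eq_bigr => j _.
by rewrite inE; case: (u 0 j != 0).
Qed.

Lemma wt_row_mx n1 n2 (a : 'rV[F]_n1) (b : 'rV[F]_n2) :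
  wt (row_mx a b) = (wt a + wt b)%N.
Proof.
rewrite !wtE big_split_ord /=; congr (_ + _)%N; apply: eq_bigr => j _.
  by rewrite row_mxEl. by rewrite row_mxEr.
Qed.

Lemma wtZ n c (u : 'rV[F]_n) : c != 0 -> wt (c *: u) = wt u.
Proof.
move=> c0; rewrite !wtE; apply: eq_bigr => j _; by rewrite mxE mulf_eq0 (negPf c0).
Qed.

Lemma wt_mix n (l l' : F) (x y : 'rV[F]_n) : l != l' ->
  (wt y <= wt (x + y) + wt (l *: x + l' *: y))%N.
Proof.
move=> ll; rewrite !wtE -big_split /=; apply: leq_sum => j _.
rewrite !mxE.
have [->|y0] := eqVneq (y 0 j) 0; first by [].
have [e1|e1] := eqVneq (x 0 j + y 0 j) 0; last by [].
case: eqP => //= e2; exfalso; move/negP: y0; apply.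
have hx : x 0 j = - y 0 j by apply/eqP; rewrite -subr_eq0 opprK e1.
move: e2; rewrite hx mulrN -mulNr -mulrDl => /eqP; rewrite mulf_eq0 => /orP[|//].
by rewrite addrC subr_eq0 eq_sym (negPf ll).
Qed.

Lemma wt0 n (u : 'rV[F]_n) : u != 0 -> exists j, u 0 j != 0.
Proof.
move=> u0; apply/existsP; apply: contraNT u0 => /existsPn h.
by apply/eqP/matrixP => i j; rewrite ord1 mxE; apply/eqP/negbNE/h.
Qed.

End Gen.



Section Herm.
Variable F : fieldType.
Variable r : nat.
Hypothesis frobD : forall x y : F, (x + y) ^+ r = x ^+ r + y ^+ r.
Hypothesis conjK : forall x : F, (x ^+ r) ^+ r = x.

Lemma frob0 : (0 : F) ^+ r = 0.
Proof.
have := frobD 0 0; rewrite addr0 => /eqP; rewrite -subr_eq0 opprD addrA subrr add0r oppr_eq0.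
by move/eqP.
Qed.

Lemma frob_sum (I : Type) (s : seq I) (P : pred I) (f : I -> F) :
  (\sum_(i <- s | P i) f i) ^+ r = \sum_(i <- s | P i) (f i) ^+ r.
Proof. exact: (big_morph (fun x => x ^+ r) frobD frob0). Qed.

Lemma frob_eq0 (x : F) : (x ^+ r == 0) = (x == 0).
Proof.
apply/eqP/eqP => [h|->]; last exact: frob0.
by rewrite -[x]conjK h frob0.
Qed.

Lemma hermDl n (u v w : 'rV[F]_n) : herm_ip r (u + v) w = herm_ip r u w + herm_ip r v w.
Proof. by rewrite /herm_ip -big_split; apply: eq_bigr => j _; rewrite mxE mulrDl. Qed.

Lemma hermDr n (u v w : 'rV[F]_n) : herm_ip r u (v + w) = herm_ip r u v + herm_ip r u w.
Proof. by rewrite /herm_ip -big_split; apply: eq_bigr => j _; rewrite mxE frobD mulrDr. Qed.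

Lemma hermZl n c (u v : 'rV[F]_n) : herm_ip r (c *: u) v = c * herm_ip r u v.
Proof. by rewrite /herm_ip mulr_sumr; apply: eq_bigr => j _; rewrite mxE mulrA. Qed.

Lemma hermZr n c (u v : 'rV[F]_n) : herm_ip r u (c *: v) = c ^+ r * herm_ip r u v.
Proof.
by rewrite /herm_ip mulr_sumr; apply: eq_bigr => j _; rewrite mxE exprMn mulrCA.
Qed.

Lemma herm_row_mx n1 n2 (a a' : 'rV[F]_n1) (b b' : 'rV[F]_n2) :
  herm_ip r (row_mx a b) (row_mx a' b') = herm_ip r a a' + herm_ip r b b'.
Proof.
rewrite /herm_ip big_split_ord /=; congr (_ + _); apply: eq_bigr => j _.
  by rewrite (row_mxEl a b) (row_mxEl a' b').
by rewrite (row_mxEr a b) (row_mxEr a' b').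
Qed.

Definition vand t n (a : 'I_n -> F) : 'M[F]_(t, n) := \matrix_(m < t, j < n) a j ^+ m.

Lemma vand_mul t n (a : 'I_n -> F) (c : 'rV[F]_t) j :
  (c *m vand t a) 0 j = (rVpoly c).[a j].
Proof.
rewrite (@horner_coef_wide _ t) ?size_poly // !mxE; apply: eq_bigr => m _.
by rewrite mxE coef_rVpoly_ord.
Qed.

Lemma roots_lt n (a : 'I_n -> F) (ai : injective a) (P : {poly F}) : P != 0 ->
  (#|[set j | P.[a j] == 0%R]| < size P)%N.
Proof.
move=> P0; set S := [set j | _].
have := max_poly_roots P0 (rs := map a (enum S)).
rewrite size_map -cardE; apply.
  by apply/allP => x /mapP [j]; rewrite mem_enum inE => h ->; exact: h.
by rewrite map_inj_uniq ?enum_uniq.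
Qed.

Lemma poly_c0 t (c : 'rV[F]_t) : rVpoly c = 0 -> c = 0.
Proof.
move=> h; apply/matrixP => i m; rewrite ord1 !mxE.
by have := congr1 (fun p : {poly F} => p`_m) h; rewrite coef_rVpoly_ord coef0.
Qed.

Lemma vand_free t n (a : 'I_n -> F) (ai : injective a) : (t <= n)%N -> row_free (vand t a).
Proof.
move=> tn; apply: inj_row_free => c hc; apply: poly_c0.
apply/eqP; apply: contraT => P0.
have := roots_lt ai P0.
have -> : [set j | (rVpoly c).[a j] == 0] = [set: 'I_n].
  by apply/setP => j; rewrite !inE -(vand_mul a c) hc mxE eqxx.
rewrite cardsT card_ord => h.
have := size_poly t (fun k => if insub k is Some i then c 0 i else 0).
rewrite -/(rVpoly c); lia.
Qed.

Lemma vand_rank t n (a : 'I_n -> F) (ai : injective a) : (t <= n)%N -> \rank (vand t a) = t.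
Proof. by move=> tn; apply/eqP; apply: vand_free. Qed.

Lemma vand_dist t n (a : 'I_n -> F) (ai : injective a) (c : 'rV[F]_t) :
  (t <= n)%N -> c *m vand t a != 0 -> (n - t + 1 <= wt (c *m vand t a))%N.
Proof.
move=> tn x0.
have P0 : rVpoly c != 0.
  apply: contra_neq x0 => /poly_c0 ->; by rewrite mul0mx.
have := roots_lt ai P0; have := size_poly t (fun k => if insub k is Some i then c 0 i else 0).
set Z := [set j | _] => h1 h2.
have e1 : #|~: Z| = wt (c *m vand t a).
  by rewrite /wt; apply: eq_card => j; rewrite !inE vand_mul.
have := cardsC Z; rewrite e1 card_ord; rewrite -/(rVpoly c) in h1; move=> h3; move: h1 h2 h3; move: #|Z| (size (rVpoly c)) (wt (c *m vand t a)) => A B C h1 h2 h3; clear -h1 h2 h3 tn; lia.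
Qed.

End Herm.



Section Dual.
Variable F : fieldType.
Variable r : nat.
Hypothesis frobD : forall x y : F, (x + y) ^+ r = x ^+ r + y ^+ r.
Hypothesis conjK : forall x : F, (x ^+ r) ^+ r = x.

Lemma dual_sum t n (b : 'I_n -> F) (y : 'rV[F]_n) : y *m (vand t b)^T = 0 ->
  forall f : {poly F}, (size f <= t)%N -> \sum_j y 0 j * f.[b j] = 0.
Proof.
move=> hy f hf.
have hm : forall m : 'I_t, \sum_j y 0 j * b j ^+ m = 0.
  move=> m; transitivity ((y *m (vand t b)^T) 0 m); last by rewrite hy mxE.
  by rewrite !mxE; apply: eq_bigr => j _; rewrite !mxE.
under eq_bigr => j _ do rewrite (horner_coef_wide _ hf) mulr_sumr.
rewrite exchange_big /= big1 // => m _.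
under eq_bigr => j _ do rewrite mulrCA.
by rewrite -mulr_sumr hm mulr0.
Qed.

Lemma dual_dist t n (b : 'I_n -> F) (bi : injective b) (y : 'rV[F]_n) :
  y *m (vand t b)^T = 0 -> y != 0 -> (t < wt y)%N.
Proof.
move=> hy y0; rewrite ltnNge; apply/negP => hw.
have [j0 hj0] := wt0 y0.
set S := [set j | y 0 j != 0].
pose f := \prod_(l <- enum (S :\ j0)) ('X - (b l)%:P).
have hS : #|S| = wt y by [].
have j0S : j0 \in S by rewrite inE.
have sf : (size f <= t)%N.
  rewrite size_prod_XsubC -cardE.
  have := cardsD1 j0 S; rewrite j0S hS; lia.
have := dual_sum hy sf; rewrite (bigD1 j0) //= big1 ?addr0.
  apply/eqP; rewrite mulf_neq0 // horner_prod prodf_seq_neq0.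
  apply/allP => l; rewrite mem_enum !inE => /andP [lj _] /=.
  by rewrite hornerXsubC subr_eq0; apply: contra_neq lj => /bi ->.
move=> j jj0; have [->|yj] := eqVneq (y 0 j) 0; first by rewrite mul0r.
apply/eqP; rewrite mulf_eq0; apply/orP; right.
rewrite horner_prod prodf_seq_eq0; apply/hasP; exists j.
  by rewrite mem_enum !inE jj0 yj.
by rewrite /= hornerXsubC subrr.
Qed.

Lemma frob_vand k n (a : 'I_n -> F) (c : 'rV[F]_k) j :
  ((c *m vand k a) 0 j) ^+ r =
  (map_mx (fun z => z ^+ r) c *m vand k (fun i => a i ^+ r)) 0 j.
Proof.
rewrite !mxE frob_sum //; apply: eq_bigr => m _.
by rewrite !mxE exprMn exprAC.
Qed.

Lemma orth_xy k t n (a : 'I_n -> F) (c : 'rV[F]_k) (y : 'rV[F]_n) :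
  (k <= t)%N -> y *m (vand t (fun i => a i ^+ r))^T = 0 ->
  herm_ip r (c *m vand k a) y = 0 /\ herm_ip r y (c *m vand k a) = 0.
Proof.
move=> kt hy.
set f := rVpoly (map_mx (fun z => z ^+ r) c).
have sf : (size f <= t)%N by apply: leq_trans (size_poly _ _) kt.
have key : \sum_j y 0 j * f.[a j ^+ r] = 0 by apply: dual_sum hy _ sf.
have e : forall j, ((c *m vand k a) 0 j) ^+ r = f.[a j ^+ r].
  by move=> j; rewrite frob_vand // vand_mul.
split; last first.
  by rewrite /herm_ip -[RHS]key; apply: eq_bigr => j _; rewrite e.
apply/eqP; rewrite -(frob_eq0 frobD conjK) /herm_ip frob_sum //.
rewrite -[X in _ == X]key; apply/eqP; apply: eq_bigr => j _.
by rewrite exprMn conjK e mulrC.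
Qed.

End Dual.



Section Lams.
Variable F : finFieldType.
Variables (r p e : nat).
Hypothesis pp : prime p.
Hypothesis e0 : (0 < e)%N.
Hypothesis rE : r = (p ^ e)%N.
Hypothesis hq : #|F| = (r ^ 2)%N.

Lemma r_ge2 : (2 <= r)%N.
Proof.
rewrite rE; have p1 := prime_gt1 pp.
have : (p ^ 1 <= p ^ e)%N by rewrite leq_pexp2l // ltnW.
rewrite expn1; lia.
Qed.

Lemma p_char : p \in [pchar F].
Proof. apply: (card_finPcharP (n := (e * 2)%N)) => //; by rewrite hq rE expnM. Qed.

Lemma frobD (x y : F) : (x + y) ^+ r = x ^+ r + y ^+ r.
Proof.
apply: exprDn_pchar; rewrite rE pnatX (pnatE _ pp) p_char //.
Qed.

Lemma conjK (x : F) : (x ^+ r) ^+ r = x.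
Proof. by rewrite -exprM mulnn -hq expf_card. Qed.

Lemma prim_exists : exists z : F, (#|F|.-1).-primitive_root z.
Proof.
set rs := enum [pred x : F | x != 0].
have szrs : size rs = #|F|.-1 by rewrite -cardE -(cardC1 (0 : F)); apply: eq_card => x; rewrite !inE.
have q1 : (1 < #|F|)%N := finNzRing_gt1 F.
have : has (#|F|.-1).-primitive_root rs.
  apply: has_prim_root; rewrite ?szrs ?enum_uniq //; first lia.
  apply/allP => x; rewrite mem_enum inE => x0; rewrite unity_rootE.
  have := expf_card x; rewrite -(ltn_predK q1) exprSr => h.
  by apply/eqP; apply: (mulIf x0); rewrite mul1r.
by case/hasP => z _ hz; exists z.
Qed.

Lemma lams : exists l l' : F, [/\ l * l ^+ r = -1, l' * l' ^+ r = -1 & l != l'].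
Proof.
have r2 := r_ge2.
have [z hz] := prim_exists.
have qE : (#|F|.-1 = r.-1 * r.+1)%N by rewrite hq; nia.
set zeta := z ^+ r.-1.
have hzeta : zeta * zeta ^+ r = 1.
  by rewrite -exprS /zeta -exprM -qE prim_expr_order.
have zeta1 : zeta != 1.
  rewrite /zeta -(prim_order_dvd hz); apply/negP => /dvdn_leq.
  have : (0 < r.-1)%N by lia.
  move=> h /(_ h); rewrite qE; nia.
suff [l [hl]] : exists l : F, l * l ^+ r = -1.
  exists l, (l * zeta); split => //.
    by rewrite exprMn mulrACA hl hzeta mulr1.
  have l0 : l != 0 by apply: contra_eq_neq hl => ->; rewrite mul0r eq_sym oppr_eq0 oner_eq0.
  apply: contra_neq zeta1 => h; apply: (mulfI l0); by rewrite mulr1 -h.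
have [p2|p2] := eqVneq p 2.
  exists 1; rewrite expr1n mulr1.
  have := p_char; rewrite p2 => /andP [_ h2].
  by apply/eqP; rewrite -addr_eq0 -mulr2n.
have rodd : odd r.
  rewrite rE oddX; have := even_prime pp; case=> [/eqP|->]; last by rewrite orbT.
  by rewrite (negPf p2).
set h := r./2.
have rh : r = (h.*2).+1 by rewrite -[LHS](odd_double_half r) rodd.
exists (z ^+ h).
set t := z ^+ h * (z ^+ h) ^+ r.
have tE : t = z ^+ (h * r.+1) by rewrite /t -exprS -exprM.
have t2 : t ^+ 2 = 1.
  rewrite tE -exprM (_ : (h * r.+1 * 2 = #|F|.-1)%N) ?prim_expr_order //.
  rewrite qE; lia.
have t1 : t != 1.
  rewrite tE -(prim_order_dvd hz); apply/negP => /dvdn_leq.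
  have : (0 < h * r.+1)%N by nia.
  move=> hh /(_ hh); rewrite qE; nia.
have : (t - 1) * (t + 1) = 0 by rewrite -subr_sqr expr1n t2 subrr.
move/eqP; rewrite mulf_eq0 subr_eq0 (negPf t1) /= addr_eq0 => /eqP.
done.
Qed.
End Lams.



Lemma cast_props (F : fieldType) r d a b a' b' (e1 : a = a') (e2 : b = b') (X : 'M[F]_(a, b)) :
  [/\ code_dim (castmx (e1, e2) X) = code_dim X,
      herm_self_orth r X -> herm_self_orth r (castmx (e1, e2) X)
    & min_dist_ge X d -> min_dist_ge (castmx (e1, e2) X) d].
Proof. by case: a' / e1; case: b' / e2; rewrite castmx_id. Qed.

Lemma rowfreeB (F : fieldType) n (l l' : F) : l != l' ->
  row_free (block_mx (1%:M : 'M_n) (l%:M) (1%:M : 'M_n) (l'%:M)).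
Proof.
move=> ll; apply: inj_row_free => v.
rewrite -(hsubmxK v) mul_row_block !mulmx1 !mul_mx_scalar -row_mx0 => /eq_row_mx [h1 h2].
have e : rsubmx v = - lsubmx v by apply/eqP; rewrite -addr_eq0 addrC h1.
move: h2; rewrite e scalerN -scaleNr -scalerDl => /eqP; rewrite scaler_eq0.
case/orP => [|/eqP ->]; last by rewrite oppr0 row_mx0.
by rewrite subr_eq0 (negPf ll).
Qed.

Unset Implicit Arguments.

Theorem corollary5p2 (F : finFieldType) (r : nat)
  (hr : exists p e : nat, [/\ prime p, (0 < e)%N & r = (p ^ e)%N])
  (hq : #|F| = (r ^ 2)%N)
  (n k : nat) (hkn : (k <= n)%N) (hnq : (n <= r ^ 2)%N)
  (i : nat) (hi : (i <= n - k)%N) :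
  exists (s l m : nat) (kk : 'I_s -> nat) (G : forall j : 'I_s, 'M[F]_(kk j, m))
         (A : 'M[F]_(s, l)),
    [/\ (\sum_(j < l) m)%N = (2 * n)%N,
        herm_self_orth r (mp_gen G A),
        code_dim (mp_gen G A) = (n - i)%N
      & min_dist_ge (mp_gen G A) (minn (2 * (n - k + 1)) (k + i + 1))].
Proof.
have [p [e [pp e0 rE]]] := hr.
have fD := frobD pp rE hq.
have cK := conjK hq.
have [l [l' [hl hl' ll]]] := lams pp e0 rE hq.
have hn : (n <= #|F|)%N by rewrite hq.
pose a := fun j : 'I_n => (enum_val (widen_ord hn j) : F).
have ai : injective a.
  by move=> j1 j2 /enum_val_inj /(congr1 val) /= h; apply: val_inj.
pose b := fun j : 'I_n => a j ^+ r.
have bi : injective b.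
  by move=> j1 j2 h; apply: ai; rewrite -[a j1]cK -[a j2]cK; congr (_ ^+ r).
pose t := (k + i)%N.
have tn : (t <= n)%N by rewrite /t; lia.
pose V1 := vand k a.
pose K := kermx (vand t b)^T.
pose Gm := block_mx V1 (l *: V1) K (l' *: K).
exists 1%N, 1%N, (n + n)%N, (fun _ => (k + n)%N), (fun _ => Gm), 1%:M.
have eX : mp_gen (fun _ : 'I_1 => Gm) (1%:M : 'M[F]_1) =
  castmx (esym (big_ord1 _ (fun=> (k + n)%N)), esym (big_ord1 _ (fun=> (n + n)%N))) Gm.
  rewrite [in RHS](mxEmxblock Gm) castmxK /mp_gen; apply: eq_mxblock => i0 j0.
  by rewrite !ord1 mxE /= scale1r.
rewrite eX.
match goal with |- context [castmx (?e1, ?e2) Gm] =>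
  have [Q1 Q2 Q3] := @cast_props F r (minn (2 * (n - k + 1)) (k + i + 1)) _ _ _ _ e1 e2 Gm end.
have dec : forall u, in_code Gm u -> exists c1 c2,
    u = row_mx (c1 *m V1 + c2 *m K) (l *: (c1 *m V1) + l' *: (c2 *m K)).
  move=> u /submxP [D ->]; exists (lsubmx D), (rsubmx D).
  by rewrite -{1}(hsubmxK D) mul_row_block !scalemxAr.
have hK : forall c2 : 'rV_n, (c2 *m K) *m (vand t b)^T = 0.
  by move=> c2; rewrite -mulmxA mulmx_ker mulmx0.
have kt : (k <= t)%N by rewrite /t leq_addr.
have l0 : l != 0.
  by apply: contra_eq_neq hl => ->; rewrite mul0r eq_sym oppr_eq0 oner_eq0.
split.
- by rewrite big_ord1 mul2n addnn.
- apply: Q2 => u v /dec [c1 [c2 ->]] /dec [d1 [d2 ->]].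
  have [o1 o2] := orth_xy fD cK c1 kt (hK d2).
  have [o3 o4] := orth_xy fD cK d1 kt (hK c2).
  rewrite herm_row_mx !hermDl !(hermDr fD) !hermZl !hermZr o1 o4.
  rewrite !mulr0 !mulrA hl hl'; ring.
- have eG : Gm = block_mx V1 0 0 K *m block_mx 1%:M l%:M 1%:M l'%:M.
    by rewrite mulmx_block !mulmx1 !mul0mx !mul_mx_scalar !addr0 !add0r.
  rewrite Q1 /code_dim eG mxrankMfree ?rowfreeB // rank_diag_block_mx.
  rewrite vand_rank // mxrank_ker mxrank_tr vand_rank //; lia.
- apply: Q3 => u /dec [c1 [c2 ->]] u0.
  rewrite wt_row_mx.
  have [y0|y0] := eqVneq (c2 *m K) 0.
    rewrite y0 scaler0 !addr0 wtZ // in u0 *.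
    have x0 : c1 *m V1 != 0 by apply: contra_neq u0 => ->; rewrite scaler0 row_mx0.
    have := vand_dist ai hkn x0; rewrite -/V1; lia.
  have := dual_dist bi (hK c2) y0; have := wt_mix (c1 *m V1) (c2 *m K) ll; rewrite /t => h1 h2; apply: leq_trans (geq_minr _ _) _; rewrite addn1; exact: leq_trans h2 h1.
Qed.
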